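(* In the setting described in the context, for every $n\ge1$ and every $y\in\mathbb R^p$, $$\tau_n\widetilde J(x_n,w_n,y)\le\langle x_{n+1}-z_{n+1},x^\star-x_{n+1}\rangle+\frac1\beta\langle y_n-y_{n-1},y-y_n\rangle+\psi\delta_n\langle x_n-z_{n+1},x_{n+1}-x_n\rangle+\tau_n\langle\theta_n,x_n-x_{n+1}\rangle,$$ where $\widetilde J(x,w,y)=F(x,w)+\langle y,H(x)-w\rangle-F(x^\star,w^\star)$.
   Context: Let $f:\mathbb{R}^p\to(-\infty,+\infty]$ and $g:\mathbb{R}^q\to(-\infty,+\infty]$ be proper closed convex functions; $f^*$ is the Fenchel conjugate, $\mathrm{dom}$ the effective domain, $\mathrm{Prox}_{\lambda h}(x)=\arg\min_u\{h(u)+\frac{1}{2\lambda}\|u-x\|^2\}$. Let $h:\mathbb R^q\to\mathbb R$ be convex with $L_h$-Lipschitz gradient, and $H:\mathrm{dom}(g)\to\mathrm{dom}(f)$ continuously differentiable with Jacobian $H'$, such that $x\mapsto\langle H(x),y\rangle$ is convex for every $y\in\mathrm{dom}(f^* )$. Set $\Phi(x,y)=h(x)+\langle H(x),y\rangle$ and $\mathcal L(x,y)=g(x)+\Phi(x,y)-f^*(y)$. Assume: (A1) the set of saddle points $\{(x^\star,y^\star)\in\mathrm{dom}(g)\times\mathrm{dom}(f^* ):-\nabla_x\Phi(x^\star,y^\star)\in\partial g(x^\star),\ \nabla_y\Phi(x^\star,y^\star)\in\partial f^*(y^\star)\}$ is nonempty, $\mathrm{dom}(g)\times\mathrm{dom}(f^*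 )\subseteq\mathrm{dom}(\Phi)$, $\mathcal L(x^\star,y^\star)$ finite; (A2) $\Phi(\cdot,y)$ convex differentiable, $\Phi(x,\cdot)$ concave differentiable, and on every pair of bounded sets $\mathcal X,\mathcal Y$ there are $L_{yy},L_{xx}\ge0,L_{xy}>0$ with $\|\nabla_y\Phi(x,y)-\nabla_y\Phi(x,\tilde y)\|\le L_{yy}\|y-\tilde y\|$, $\|\nabla_x\Phi(x,y)-\nabla_x\Phi(\tilde x,\tilde y)\|\le L_{xx}\|x-\tilde x\|+L_{xy}\|y-\tilde y\|$ on $(\mathcal X\cap\mathrm{dom}(g))\times(\mathcal Y\cap\mathrm{dom}(f^* ))$. Let $F(x,w)=g(x)+h(x)+f(w)$, and let $(x^\star,w^\star,y^\star)$ be a fixed point of $\widetilde\Omega=\{(x,w,y)\in\mathrm{dom}(g)\times\mathrm{dom}(f)\times\mathrm{dom}(f^* ): -H'(x)^\top y-\nabla h(x)\in\partial g(x),\ y\in\partial f(w),\ H(x)=w\}$. Algorithm PDAc-L (applied to this $\Phi$): choose $\psi\in(1,1+\sqrt3)$, $\xi>0$, $\varphi>1$ with $\omega:=2\psi-\xi-\frac{\psi^3\varphi}{1+\psi}>0$, $\tau_{\max}>0$, $\nu,\mu\in(0,1)$, $\eta\in[0,1)$, integer $M\ge1$, $\beta>0$, $x_0\in\mathrm{dom}(g)$, $y_0\in\mathrm{dom}(f^* )$, $\tau_0\in(0,\tau_{\max}]$; $z_0=x_0$, $\delta_0=1$. For $n\ge1$: $z_n=\frac{\psi-1}{\psi}x_{n-1}+\frac1\psi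 z_{n-1}$, $x_n=\mathrm{Prox}_{\tau_{n-1}g}(z_n-\tau_{n-1}\nabla_x\Phi(x_{n-1},y_{n-1}))$; with $\tau=\min\{\varphi\tau_{n-1},\tau_{\max}\}$, set $\tau_n=\tau\mu^i$, $y_n=\mathrm{Prox}_{\beta\tau_nf^*}(y_{n-1}+\beta\tau_nH(x_n))$, where $i\ge0$ is the smallest integer with $\frac{\tau_n\tau_{n-1}}{\xi}\|\theta_n\|^2+2\tau_n\Phi_n^y\le\nu r_n+(1-\nu)c_n$, $\theta_n=\nabla_x\Phi(x_n,y_n)-\nabla_x\Phi(x_{n-1},y_{n-1})$, $\Phi_n^y=\Phi(x_n,y_{n-1})+\langle\nabla_y\Phi(x_n,y_{n-1}),y_n-y_{n-1}\rangle-\Phi(x_n,y_n)$ (here $=0$), $r_n=\omega\delta_{n-1}\|x_n-x_{n-1}\|^2+\frac1\beta\|y_n-y_{n-1}\|^2$, $c_n=\frac{\eta}{|\mathcal I_n|}\sum_{i\in\mathcal I_n}r_i$, $\mathcal I_n=\{n-1,\dots,\max\{n-M,1\}\}$ ($c_1:=0$); $\delta_n=\tau_n/\tau_{n-1}$. Define $w_n=\mathrm{Prox}_{f/(\beta\tau_n)}(y_{n-1}/(\beta\tau_n)+H(x_n))$, so that $y_n=y_{n-1}+\beta\tau_n(H(x_n)-w_n)$. *)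

(* Defs.v *)
From HB Require Import structures.
From mathcomp Require Import all_boot all_order all_algebra.
From mathcomp Require Import boolp classical_sets reals constructive_ereal ereal.

Set Implicit Arguments.
Unset Strict Implicit.
Unset Printing Implicit Defensive.

Import Order.TTheory GRing.Theory Num.Theory.
Local Open Scope ring_scope.
Local Open Scope ereal_scope.
Local Open Scope ring_scope.

Section Defs.
Variable R : realType.

Definition vec (n : nat) := 'cV[R]_n.

Definition dotv {n} (u v : vec n) : R := \sum_(i < n) u i 0 * v i 0.
Definition normv {n} (u : vec n) : R := Num.sqrt (dotv u u).

Definition edom {n} (phi : vec n -> \bar R) (x : vec n) : Prop := (phi x < +oo)%E.

Definition eproper {n} (phi : vec n -> \bar R) : Prop :=
  (forall x, phi x != -oo%E) /\ (exists x, phi x \is a fin_num).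

Definition econvex {n} (phi : vec n -> \bar R) : Prop :=
  forall (x y : vec n) (t : R), 0 < t < 1 ->
    (phi (t *: x + (1 - t) *: y)%R <= t%:E * phi x + (1 - t)%R%:E * phi y)%E.

(* closed = lower semicontinuous *)
Definition eclosed {n} (phi : vec n -> \bar R) : Prop :=
  forall (x : vec n) (a : \bar R), (a < phi x)%E ->
    exists2 d : R, 0 < d & forall u : vec n, normv (u - x) < d -> (a < phi u)%E.

Definition proper_closed_convex {n} (phi : vec n -> \bar R) : Prop :=
  [/\ eproper phi, eclosed phi & econvex phi].

Definition fconj {n} (phi : vec n -> \bar R) (y : vec n) : \bar R :=
  ereal_sup [set ((dotv x y)%:E - phi x)%E | x in [set: vec n]].

Definition subdiff {n} (phi : vec n -> \bar R) (x u : vec n) : Prop :=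
  phi x \is a fin_num /\
  forall v : vec n, (phi x + (dotv u (v - x)%R)%:E <= phi v)%E.

Definition is_prox {n} (lam : R) (phi : vec n -> \bar R) (v u : vec n) : Prop :=
  forall u' : vec n,
    (phi u + ((2 * lam)^-1 * normv (u - v) ^+ 2)%R%:E
       <= phi u' + ((2 * lam)^-1 * normv (u' - v) ^+ 2)%R%:E)%E.

Definition convex_on {n} (D : vec n -> Prop) (phi : vec n -> R) : Prop :=
  forall (x y : vec n) (t : R), D x -> D y -> 0 < t < 1 ->
    phi (t *: x + (1 - t) *: y) <= t * phi x + (1 - t) * phi y.

Definition bounded_set {n} (S : vec n -> Prop) : Prop :=
  exists B : R, forall x, S x -> normv x <= B.

Definition has_gradient {n} (h : vec n -> R) (gh : vec n -> vec n) : Prop :=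
  forall (x : vec n) (eps : R), 0 < eps ->
    exists2 d : R, 0 < d & forall v : vec n, normv v < d ->
      `|h (x + v) - h x - dotv (gh x) v| <= eps * normv v.

Definition has_jacobian_on {p q} (D : vec q -> Prop) (H : vec q -> vec p)
  (JH : vec q -> 'M[R]_(p, q)) : Prop :=
  forall (x : vec q) (eps : R), D x -> 0 < eps ->
    exists2 d : R, 0 < d & forall v : vec q, D (x + v) -> normv v < d ->
      normv (H (x + v) - H x - JH x *m v) <= eps * normv v.

Definition mx_continuous_on {p q} (D : vec q -> Prop)
  (JH : vec q -> 'M[R]_(p, q)) : Prop :=
  forall (x : vec q) (eps : R), D x -> 0 < eps ->
    exists2 d : R, 0 < d & forall x' : vec q, D x' -> normv (x' - x) < d ->
      forall i j, `|JH x' i j - JH x i j| < eps.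

Definition Phi {p q} (h : vec q -> R) (H : vec q -> vec p) (x : vec q) (y : vec p) : R :=
  h x + dotv (H x) y.
Definition gradxPhi {p q} (gh : vec q -> vec q) (JH : vec q -> 'M[R]_(p, q))
  (x : vec q) (y : vec p) : vec q := gh x + (JH x)^T *m y.
Definition gradyPhi {p q} (H : vec q -> vec p) (x : vec q) (y : vec p) : vec p := H x.

Definition delta (tau : nat -> R) (n : nat) : R :=
  if n is m.+1 then tau m.+1 / tau m else 1.

Definition rterm {p q} (omega beta d : R) (a b : vec q) (u v : vec p) : R :=
  omega * d * normv (a - b) ^+ 2 + beta^-1 * normv (u - v) ^+ 2.

(* the accepted r_i, for i >= 1 *)
Definition rseq {p q} (omega beta : R) (x : nat -> vec q) (y : nat -> vec p)
  (tau : nat -> R) (i : nat) : R :=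
  rterm omega beta (delta tau i.-1) (x i) (x i.-1) (y i) (y i.-1).

Definition cseq {p q} (omega beta eta : R) (M : nat) (x : nat -> vec q)
  (y : nat -> vec p) (tau : nat -> R) (n : nat) : R :=
  if (n <= 1)%N then 0
  else eta / (n - maxn (n - M) 1)%:R *
       \sum_(maxn (n - M) 1 <= i < n) rseq omega beta x y tau i.

(* line-search acceptance test at iteration n >= 1 for a trial step t
   and trial dual point yc *)
Definition ls_cond {p q} (h : vec q -> R) (gh : vec q -> vec q) (H : vec q -> vec p)
  (JH : vec q -> 'M[R]_(p, q)) (xi nu omega beta eta : R) (M : nat)
  (x : nat -> vec q) (y : nat -> vec p) (tau : nat -> R) (n : nat)
  (t : R) (yc : vec p) : Prop :=
  let theta := gradxPhi gh JH (x n) yc - gradxPhi gh JH (x n.-1) (y n.-1) in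
  let Phiy := Phi h H (x n) (y n.-1) + dotv (gradyPhi H (x n) (y n.-1)) (yc - y n.-1)
              - Phi h H (x n) yc in
  let r := rterm omega beta (delta tau n.-1) (x n) (x n.-1) yc (y n.-1) in
  t * tau n.-1 / xi * normv theta ^+ 2 + 2 * t * Phiy
    <= nu * r + (1 - nu) * cseq omega beta eta M x y tau n.

Definition PDAcL_run {p q} (g : vec q -> \bar R) (h : vec q -> R)
  (gh : vec q -> vec q) (f : vec p -> \bar R) (H : vec q -> vec p)
  (JH : vec q -> 'M[R]_(p, q))
  (psi xi phi tau_max nu mu eta beta tau0 : R) (M : nat) (x0 : vec q) (y0 : vec p)
  (x z : nat -> vec q) (y : nat -> vec p) (tau : nat -> R) : Prop :=
  let omega := 2 * psi - xi - psi ^+ 3 * phi / (1 + psi) in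
  [/\ x 0 = x0, y 0 = y0, z 0 = x0, tau 0 = tau0 &
  forall n : nat, (0 < n)%N ->
  [/\ z n = ((psi - 1) / psi) *: x n.-1 + psi^-1 *: z n.-1,
      is_prox (tau n.-1) g
        (z n - tau n.-1 *: gradxPhi gh JH (x n.-1) (y n.-1)) (x n) &
      let tbar := Num.min (phi * tau n.-1) tau_max in
      exists i : nat,
        [/\ tau n = tbar * mu ^+ i,
            is_prox (beta * tau n) (fconj f) (y n.-1 + (beta * tau n) *: H (x n)) (y n),
            ls_cond h gh H JH xi nu omega beta eta M x y tau n (tau n) (y n) &
            forall j : nat, (j < i)%N -> forall yc : vec p,
              is_prox (beta * (tbar * mu ^+ j)) (fconj f)
                (y n.-1 + (beta * (tbar * mu ^+ j)) *: H (x n)) yc ->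
              ~ ls_cond h gh H JH xi nu omega beta eta M x y tau n
                  (tbar * mu ^+ j) yc]]].

Definition Fobj {p q} (g : vec q -> \bar R) (h : vec q -> R) (f : vec p -> \bar R)
  (x : vec q) (w : vec p) : \bar R := (g x + (h x)%:E + f w)%E.

Definition Jtilde {p q} (g : vec q -> \bar R) (h : vec q -> R) (f : vec p -> \bar R)
  (H : vec q -> vec p) (xs : vec q) (ws : vec p) (x : vec q) (w : vec p) (y : vec p)
  : \bar R :=
  (Fobj g h f x w + (dotv y (H x - w)%R)%:E - Fobj g h f xs ws)%E.

(* saddle points of L(x,y) = g(x) + Phi(x,y) - f^*(y) *)
Definition is_saddle {p q} (g : vec q -> \bar R) (h : vec q -> R) (gh : vec q -> vec q)
  (f : vec p -> \bar R) (H : vec q -> vec p) (JH : vec q -> 'M[R]_(p, q))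
  (xs : vec q) (ys : vec p) : Prop :=
  [/\ edom g xs, edom (fconj f) ys,
      subdiff g xs (- gradxPhi gh JH xs ys) &
      subdiff (fconj f) ys (gradyPhi H xs ys)].

Definition Lagr {p q} (g : vec q -> \bar R) (h : vec q -> R) (f : vec p -> \bar R)
  (H : vec q -> vec p) (x : vec q) (y : vec p) : \bar R :=
  (g x + (Phi h H x y)%:E - fconj f y)%E.

End Defs.

(* Main.v *)
Require Import Defs.
From HB Require Import structures.
From mathcomp Require Import all_boot all_order all_algebra.
From mathcomp Require Import boolp classical_sets reals constructive_ereal ereal.
Import Order.TTheory GRing.Theory Num.Theory.
From mathcomp Require Import ring lra.
Import Order.TTheory GRing.Theory Num.Theory.
Local Open Scope ring_scope.
Section Aux.
Context {R : realType}.

Lemma dotvC {n} (u v : vec R n) : dotv u v = dotv v u.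
Proof. by apply: eq_bigr => i _; rewrite mulrC. Qed.
Lemma dotvDl {n} (u v w : vec R n) : dotv (u + v) w = dotv u w + dotv v w.
Proof. rewrite /dotv -big_split /=; apply: eq_bigr => i _; by rewrite !mxE mulrDl. Qed.
Lemma dotvZl {n} a (u w : vec R n) : dotv (a *: u) w = a * dotv u w.
Proof. rewrite /dotv mulr_sumr; apply: eq_bigr => i _; by rewrite !mxE mulrA. Qed.
Lemma dotvNl {n} (u w : vec R n) : dotv (- u) w = - dotv u w.
Proof. by rewrite -scaleN1r dotvZl mulN1r. Qed.
Lemma dotvBl {n} (u v w : vec R n) : dotv (u - v) w = dotv u w - dotv v w.
Proof. by rewrite dotvDl dotvNl. Qed.
Lemma dotvDr {n} (u v w : vec R n) : dotv w (u + v) = dotv w u + dotv w v.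
Proof. by rewrite dotvC dotvDl !(dotvC w). Qed.
Lemma dotvZr {n} a (u w : vec R n) : dotv w (a *: u) = a * dotv w u.
Proof. by rewrite dotvC dotvZl !(dotvC w). Qed.
Lemma dotvNr {n} (u w : vec R n) : dotv w (- u) = - dotv w u.
Proof. by rewrite dotvC dotvNl !(dotvC w). Qed.
Lemma dotvBr {n} (u v w : vec R n) : dotv w (u - v) = dotv w u - dotv w v.
Proof. by rewrite dotvDr dotvNr. Qed.
Lemma dotv0r {n} (u : vec R n) : dotv u 0 = 0.
Proof. by rewrite /dotv big1 // => i _; rewrite mxE mulr0. Qed.

Lemma dotv_ge0 {n} (u : vec R n) : 0 <= dotv u u.
Proof. by apply: sumr_ge0 => i _; rewrite -expr2 sqr_ge0. Qed.
Lemma dotv_eq0 {n} (u : vec R n) : dotv u u = 0 -> u = 0.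
Proof.
move=> h0; apply/matrixP => i j; rewrite (ord1 j) mxE.
have := psumr_eq0P (P := predT) (F := fun i : 'I_n => u i 0 * u i 0).
move=> /(_ (fun i _ => ltac:(by rewrite -expr2 sqr_ge0)) h0 i isT).
by move/eqP; rewrite mulf_eq0 orbb => /eqP.
Qed.
Lemma normv_ge0 {n} (u : vec R n) : 0 <= normv u.
Proof. exact: sqrtr_ge0. Qed.
Lemma normv_sq {n} (u : vec R n) : normv u ^+ 2 = dotv u u.
Proof. by rewrite sqr_sqrtr // dotv_ge0. Qed.
Lemma normvZ {n} a (u : vec R n) : normv (a *: u) = `|a| * normv u.
Proof.
rewrite /normv dotvZl dotvZr mulrA -expr2 sqrtrM ?sqr_ge0 //.
by rewrite sqrtr_sqr.
Qed.
Lemma cauchy_schwarz {n} (u v : vec R n) : `|dotv u v| <= normv u * normv v.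
Proof.
have hB : (dotv u v)^+2 <= dotv u u * dotv v v.
  have [/dotv_eq0 ->|hC] := eqVneq (dotv v v) 0.
    by rewrite !dotv0r expr0n /= mulr0.
  have hC0 : 0 < dotv v v by rewrite lt_def hC dotv_ge0.
  have := dotv_ge0 (dotv v v *: u - dotv u v *: v).
  rewrite !dotvBl !dotvBr !dotvZl !dotvZr (dotvC v u) => h1.
  have h2 : 0 <= dotv v v * (dotv u u * dotv v v - dotv u v ^+ 2).
    by move: h1; congr (_ <= _); ring.
  by rewrite -subr_ge0 -(pmulr_rge0 _ hC0).
rewrite -sqrtr_sqr /normv -sqrtrM ?dotv_ge0 // ler_sqrt //.
by apply: mulr_ge0; apply: dotv_ge0.
Qed.
Lemma dotv_adj p q (A : 'M[R]_(p, q)) (u : vec R q) (y : vec R p) :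
  dotv (A *m u) y = dotv u (A^T *m y).
Proof.
rewrite /dotv.
under eq_bigr do rewrite mxE big_distrl /=.
rewrite exchange_big /=; apply: eq_bigr => j _.
rewrite mxE big_distrr /=; apply: eq_bigr => i _; rewrite !mxE; ring.
Qed.

Lemma vec_eq {n} (a b : vec R n) : (forall i, a i 0 = b i 0) -> a = b.
Proof. by move=> hab; apply/matrixP => i j; rewrite (ord1 j). Qed.

Lemma dotv_expand {n} t (a b : vec R n) :
  dotv (a + t *: b) (a + t *: b) = dotv a a + 2 * t * dotv a b + t ^+ 2 * dotv b b.
Proof. rewrite !dotvDl !dotvDr !dotvZl !dotvZr (dotvC b a); ring. Qed.

Lemma prox_sub {n} {lam} {phi : vec R n -> \bar R} {v u : vec R n} :
  eproper phi -> econvex phi -> 0 < lam -> is_prox lam phi v u ->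
  exists G : R, phi u = G%:E /\
    forall u', ((G + lam^-1 * dotv (v - u) (u' - u))%:E <= phi u')%E.
Proof.
move=> [hninf [x0 hx0]] hconv hlam hprox.
have : phi u \is a fin_num.
  have := hprox x0; case E: (phi u) => [r| |] //.
    move: hx0; case: (phi x0) => [r'| |] //= _.
  by move: (hninf u); rewrite E.
case E: (phi u) => [G| |] // _; exists G; split => // u'.
case E': (phi u') => [Gu| |]; [| exact: leey | by move: (hninf u'); rewrite E'].
rewrite lee_fin leNgt; apply/negP => hlt.
set c := (2 * lam)^-1.
set K := dotv (u' - u) (u' - u).
set B := dotv (v - u) (u' - u).
have hc : 0 < c by rewrite invr_gt0 mulr_gt0.
have hK : 0 <= K by apply: dotv_ge0.
have key : forall t, 0 < t < 1 ->
    G <= t * Gu + (1 - t) * G + c * (- (2 * t * B) + t ^+ 2 * K).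
  move=> t ht.
  set xt := t *: u' + (1 - t) *: u.
  have hcv := hconv u' u t ht; rewrite E E' -!EFinM -EFinD -/xt in hcv.
  have hpx := hprox xt; rewrite E in hpx.
  move: hcv hpx; case Ext: (phi xt) => [Gt| |]; last by move: (hninf xt); rewrite Ext.
    2: by [].
  rewrite !lee_fin => hcv hpx.
  have hxt : xt - v = (u - v) + t *: (u' - u).
    by apply: vec_eq => i; rewrite !mxE; ring.
  rewrite !normv_sq hxt dotv_expand in hpx.
  have hB : dotv (u - v) (u' - u) = - B by rewrite /B -dotvNl opprB.
  rewrite hB -/K -/c in hpx.
  have : c * (dotv (u - v) (u - v) + 2 * t * - B + t ^+ 2 * K) = c * (- (2 * t * B) + t ^+ 2 * K) + c * (dotv (u - v) (u - v)).
    by ring.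
  by lra.
set a := G + lam^-1 * B - Gu.
have ha : 0 < a by rewrite /a subr_gt0.
have hl : lam^-1 = 2 * c by rewrite /c invfM mulrA divff ?mul1r // pnatr_eq0.
set D := c * K + a + 1.
have hD : 0 < D by rewrite /D; have := mulr_ge0 (ltW hc) hK; lra.
set t := a / (2 * D).
have ht2 : t * (2 * D) = a by rewrite /t mulfVK // mulf_neq0 // ?pnatr_eq0 ?gt_eqF.
have ht0 : 0 < t by rewrite /t divr_gt0 // mulr_gt0.
have hcK : 0 <= c * K by apply: mulr_ge0 => //; apply: ltW.
have ht1 : t < 1 by rewrite /D in ht2; nra.
have := key t (andb_true_intro (conj ht0 ht1)).
move=> hk.
have h1 : t * a <= c * t ^+ 2 * K.
  rewrite /a hl; nra.
have h2 : a <= c * t * K.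
  have : t * a <= t * (c * t * K) by move: h1; rewrite !expr2; congr (_ <= _); ring.
  by rewrite ler_pM2l.
have := mulr_ge0 (ltW ht0) hcK.
rewrite /D in ht2. nra.
Qed.

Lemma fconj_lb {n} (f : vec R n -> \bar R) (w u : vec R n) Fw :
  f w = Fw%:E -> ((dotv w u - Fw)%:E <= fconj f u)%E.
Proof.
move=> hw; apply: ereal_sup_ubound; exists w => //.
by rewrite hw.
Qed.

Lemma fconj_at {n} (f : vec R n -> \bar R) (w yh : vec R n) Fw :
  (forall x, f x != -oo%E) -> f w = Fw%:E ->
  (forall u, ((Fw + dotv yh (u - w))%:E <= f u)%E) ->
  fconj f yh = (dotv w yh - Fw)%:E.
Proof.
move=> hninf hw hs; apply/eqP; rewrite eq_le fconj_lb // andbT.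
apply: ge_ereal_sup => _ [x _ <-].
have := hs x; have := hninf x; case: (f x) => [r| |] //= _.
rewrite !lee_fin dotvBr (dotvC yh x) (dotvC yh w) => h; lra. by move=> _; rewrite addeNy leNye.
Qed.

Lemma moreau {n} {f : vec R n -> \bar R} {lam} {yp hx w y : vec R n} {Fw} :
  (forall x, f x != -oo%E) -> 0 < lam -> f w = Fw%:E ->
  (forall u, ((Fw + dotv (yp + lam *: (hx - w)) (u - w))%:E <= f u)%E) ->
  is_prox lam (fconj f) (yp + lam *: hx) y ->
  y = yp + lam *: (hx - w) /\ fconj f y = (dotv w y - Fw)%:E.
Proof.
move=> hninf hlam hw hs hprox.
set yh := yp + lam *: (hx - w).
have hyh := fconj_at _ _ _ _ hninf hw hs.
suff -> : y = yh by split.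
have hlb := fconj_lb f w y Fw hw.
have := hprox yh; rewrite hyh.
move: hlb; case: (fconj f y) => [r| |] //= hlb.
rewrite !lee_fin in hlb *; rewrite !normv_sq => h.
have e1 : y - (yp + lam *: hx) = (yh - (yp + lam *: hx)) + 1 *: (y - yh).
  by apply: vec_eq => i; rewrite !mxE; ring.
have e2 : yh - (yp + lam *: hx) = - lam *: w.
  by apply: vec_eq => i; rewrite !mxE; ring.
have hN : dotv (y - (yp + lam *: hx)) (y - (yp + lam *: hx)) =
    dotv (yh - (yp + lam *: hx)) (yh - (yp + lam *: hx))
    - 2 * lam * (dotv w y - dotv w yh) + dotv (y - yh) (y - yh).
  rewrite [in LHS]e1 dotv_expand e2 [dotv (- lam *: w) (y - yh)]dotvZl dotvBr; ring.
rewrite hN -/yh in h.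
have hc : (2 * lam)^-1 * (2 * lam * (dotv w y - dotv w yh)) = dotv w y - dotv w yh.
  by rewrite mulrA mulVf ?mul1r // mulf_neq0 ?pnatr_eq0 ?gt_eqF.
have hK : 0 <= (2 * lam)^-1 * dotv (y - yh) (y - yh).
  by apply: mulr_ge0; [rewrite invr_ge0 mulr_ge0 // ltW|rewrite dotv_ge0].
have hK0 : (2 * lam)^-1 * dotv (y - yh) (y - yh) = 0.
  apply/eqP; rewrite eq_le hK andbT.
  have e3 : forall Nh K, (2 * lam)^-1 * (Nh - 2 * lam * (dotv w y - dotv w yh) + K) = (2 * lam)^-1 * Nh - (dotv w y - dotv w yh) + (2 * lam)^-1 * K by move=> Nh K; rewrite mulrDr mulrDr mulrN hc.
  move: h; rewrite e3; lra.
move: hK0 => /eqP; rewrite mulf_eq0 invr_eq0 mulf_eq0 pnatr_eq0 (gt_eqF hlam) /=.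
by move=> /eqP /dotv_eq0 /eqP; rewrite subr_eq0 => /eqP.
Qed.

Lemma conv_deriv (ps : R -> R) (p0 p1 c : R) :
  (forall t, 0 < t < 1 -> ps t <= t * p1 + (1 - t) * p0) ->
  (forall eps, 0 < eps -> exists2 d, 0 < d &
     forall t, 0 < t < d -> `|ps t - p0 - t * c| <= eps * t) ->
  c <= p1 - p0.
Proof.
move=> hconv hder; rewrite leNgt; apply/negP => hlt.
set a := c - (p1 - p0).
have ha : 0 < a by rewrite /a subr_gt0.
have [d hd hdt] := hder (a / 2) (divr_gt0 ha (ltr0Sn _ 1)).
set t := Num.min (d / 2) (1 / 2).
have ht0 : 0 < t by rewrite lt_min !divr_gt0.
have /andP[hm1 hm2] : (t <= d / 2) && (t <= 1 / 2) by rewrite -le_min.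
have ht1 : t < 1 by lra.
have htd : t < d by lra.
have h1 := hconv t (andb_true_intro (conj ht0 ht1)).
have h2 := hdt t (andb_true_intro (conj ht0 htd)).
have : - (ps t - p0 - t * c) <= a / 2 * t.
  by apply: le_trans (ler_norm _) _; rewrite normrN h2.
have e : a / 2 * t = (c - (p1 - p0)) * t / 2 by rewrite /a; ring.
rewrite e => h4; nra.
Qed.

Lemma phi_grad {p q} {D : vec R q -> Prop} {h : vec R q -> R} {gh}
  {H : vec R q -> vec R p} {JH} {x xs : vec R q} {y : vec R p} :
  has_gradient h gh -> has_jacobian_on D H JH -> D x -> D xs ->
  (forall t, 0 < t < 1 -> D (t *: xs + (1 - t) *: x)) ->
  convex_on D (fun x => Phi h H x y) ->
  dotv (gradxPhi gh JH x y) (xs - x) <= Phi h H xs y - Phi h H x y.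
Proof.
move=> hgh hJH hx hxs hseg hconv.
have eseg : forall t, x + t *: (xs - x) = t *: xs + (1 - t) *: x.
  by move=> t; apply: vec_eq => i; rewrite !mxE; ring.
apply: (@conv_deriv (fun t => Phi h H (x + t *: (xs - x)) y)).
  by move=> t ht /=; rewrite eseg; apply: hconv.
move=> eps heps.
set d := normv (xs - x).
set ny := normv y.
have hd : 0 <= d by apply: normv_ge0.
have hny : 0 <= ny by apply: normv_ge0.
set e1 := eps / (2 * (d + 1)).
set e2 := eps / (2 * (d + 1) * (ny + 1)).
have he1 : 0 < e1 by rewrite divr_gt0 // mulr_gt0 // ltr_wpDl.
have he2 : 0 < e2 by rewrite divr_gt0 // !mulr_gt0 // ltr_wpDl.
have [d1 hd1 hh1] := hgh x e1 he1.
have [d2 hd2 hh2] := hJH x e2 hx he2.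
exists (Num.min 1 (Num.min (d1 / (d + 1)) (d2 / (d + 1)))).
  by rewrite !lt_min ltr01 !divr_gt0 // ltr_wpDl.
move=> t /andP[ht0]; rewrite !lt_min => /and3P[ht1 htd1 htd2].
set v := t *: (xs - x).
have hnv : normv v = t * d by rewrite /v normvZ gtr0_norm.
have hv1 : normv v < d1.
  rewrite hnv; move: htd1; rewrite ltr_pdivlMr ?ltr_wpDl //; nra.
have hv2 : normv v < d2.
  rewrite hnv; move: htd2; rewrite ltr_pdivlMr ?ltr_wpDl //; nra.
have hDv : D (x + v) by rewrite /v eseg; apply: hseg; rewrite ht0.
have A := hh1 v hv1.
have B := hh2 v hDv hv2.
have hc : t * dotv (gradxPhi gh JH x y) (xs - x) = dotv (gh x) v + dotv (JH x *m v) y.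
  rewrite /gradxPhi dotv_adj /v dotvZl dotvZr dotvDl (dotvC (_ *m y)); ring.
have -> : Phi h H (x + v) y - Phi h H x y - t * dotv (gradxPhi gh JH x y) (xs - x)
   = (h (x + v) - h x - dotv (gh x) v) + dotv (H (x + v) - H x - JH x *m v) y.
  rewrite hc /Phi !dotvBl; ring.
apply: le_trans (ler_normD _ _) _.
have CS := cauchy_schwarz (H (x + v) - H x - JH x *m v) y.
have e1d : e1 * (d + 1) = eps / 2 by rewrite /e1; field; rewrite gt_eqF // ltr_wpDl.
have e2d : e2 * (d + 1) * (ny + 1) = eps / 2.
  by rewrite /e2; field; rewrite !gt_eqF // ltr_wpDl.
rewrite hnv in A B.
have hB2 : normv (H (x + v) - H x - JH x *m v) * ny <= e2 * (t * d) * ny.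
  by apply: ler_wpM2r.
have : e1 * (t * d) <= eps / 2 * t.
  rewrite -e1d; have := mulr_ge0 (ltW he1) (ltW ht0); nra.
have : e2 * (t * d) * ny <= eps / 2 * t.
  rewrite -e2d.
  have := mulr_ge0 (mulr_ge0 (ltW he2) (ltW ht0)) hd.
  have := mulr_ge0 (ltW he2) (ltW ht0).
  nra.
rewrite -/ny in CS. lra.
Qed.

Lemma dotv_D {n} (A Bm s x1 xn : vec R n) :
  dotv A (s - x1) + dotv Bm (x1 - xn) = dotv A (s - xn) + dotv (A - Bm) (xn - x1).
Proof. rewrite !dotvBl !dotvBr; ring. Qed.

Lemma dotv_E {n} (a b c d e : vec R n) :
  dotv a c - dotv b c - dotv c (a - d) + dotv e (b - d) = dotv (b - d) (e - c).
Proof. rewrite !dotvBl !dotvBr (dotvC c a) (dotvC c d) (dotvC e b) (dotvC e d); ring. Qed.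

Lemma fin_ex {x : \bar R} : x \is a fin_num -> exists r, x = r%:E.
Proof. by case: x => [r| |] // _; exists r. Qed.

Lemma edom_fin {n} {phi : vec R n -> \bar R} {x} :
  (forall x, phi x != -oo%E) -> edom phi x -> exists r, phi x = r%:E.
Proof. rewrite /edom => hn; have := hn x; case: (phi x) => [r| |] // _ _; by exists r. Qed.
End Aux.

Theorem lemma4p1 (R : realType) (p q : nat)
  (f : vec R p -> \bar R) (g : vec R q -> \bar R)
  (h : vec R q -> R) (gh : vec R q -> vec R q) (Lh : R)
  (H : vec R q -> vec R p) (JH : vec R q -> 'M[R]_(p, q))
  (* f, g proper closed convex *)
  (hf : proper_closed_convex f) (hg : proper_closed_convex g)
  (* h convex with L_h-Lipschitz gradient *)
  (hh : convex_on (fun _ : vec R q => True) h) (hgh : has_gradient h gh)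
  (hLh0 : 0 <= Lh)
  (hLh : forall x x' : vec R q, normv (gh x - gh x') <= Lh * normv (x - x'))
  (* H : dom g -> dom f, continuously differentiable with Jacobian JH *)
  (hHdom : forall x, edom g x -> edom f (H x))
  (hJH : has_jacobian_on (edom g) H JH) (hJHc : mx_continuous_on (edom g) JH)
  (hHconv : forall y : vec R p, edom (fconj f) y ->
              convex_on (edom g) (fun x => dotv (H x) y))
  (* (A1) *)
  (hA1 : exists (xs : vec R q) (ys : vec R p),
           is_saddle g h gh f H JH xs ys /\ Lagr g h f H xs ys \is a fin_num)
  (* (A2) *)
  (hA2conv : forall y : vec R p, edom (fconj f) y ->
               convex_on (edom g) (fun x => Phi h H x y))
  (hA2conc : forall x : vec R q, edom g x ->
               convex_on (edom (fconj f)) (fun y => - Phi h H x y))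
  (hA2lip : forall (X : vec R q -> Prop) (Y : vec R p -> Prop),
      bounded_set X -> bounded_set Y ->
      exists (Lyy Lxx Lxy : R), [/\ 0 <= Lyy, 0 <= Lxx, 0 < Lxy &
        forall (x x' : vec R q) (y y' : vec R p),
          X x -> edom g x -> X x' -> edom g x' ->
          Y y -> edom (fconj f) y -> Y y' -> edom (fconj f) y' ->
          normv (gradyPhi H x y - gradyPhi H x y') <= Lyy * normv (y - y') /\
          normv (gradxPhi gh JH x y - gradxPhi gh JH x' y')
            <= Lxx * normv (x - x') + Lxy * normv (y - y')])
  (* fixed point (xs, ws, ys) in Omega~ *)
  (xs : vec R q) (ws : vec R p) (ys : vec R p)
  (hfix_dom : [/\ edom g xs, edom f ws & edom (fconj f) ys])
  (hfix : [/\ subdiff g xs (- ((JH xs)^T *m ys) - gh xs),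
             subdiff f ws ys & H xs = ws])
  (* parameters of PDAc-L *)
  (psi xi phi tau_max nu mu eta beta tau0 : R) (M : nat)
  (x0 : vec R q) (y0 : vec R p)
  (hpsi : 1 < psi < 1 + Num.sqrt 3) (hxi : 0 < xi) (hphi : 1 < phi)
  (homega : 0 < 2 * psi - xi - psi ^+ 3 * phi / (1 + psi))
  (htmax : 0 < tau_max) (hnu : 0 < nu < 1) (hmu : 0 < mu < 1)
  (heta : 0 <= eta < 1) (hM : (1 <= M)%N) (hbeta : 0 < beta)
  (hx0 : edom g x0) (hy0 : edom (fconj f) y0) (htau0 : 0 < tau0 <= tau_max)
  (* iterates *)
  (x z : nat -> vec R q) (y : nat -> vec R p) (tau : nat -> R)
  (hrun : PDAcL_run g h gh f H JH psi xi phi tau_max nu mu eta beta tau0 M x0 y0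
            x z y tau)
  (w : nat -> vec R p)
  (hw : forall n, (0 < n)%N ->
          is_prox (beta * tau n)^-1 f ((beta * tau n)^-1 *: y n.-1 + H (x n)) (w n)) :
  forall (n : nat), (0 < n)%N -> forall yy : vec R p,
    let theta := gradxPhi gh JH (x n) (y n) - gradxPhi gh JH (x n.-1) (y n.-1) in
    ((tau n)%:E * Jtilde g h f H xs ws (x n) (w n) yy
      <= (dotv (x n.+1 - z n.+1) (xs - x n.+1)
          + beta^-1 * dotv (y n - y n.-1) (yy - y n)
          + psi * delta tau n * dotv (x n - z n.+1) (x n.+1 - x n)
          + tau n * dotv theta (x n - x n.+1))%:E)%E.
Proof.
case=> // m _ yy /=.
set n := m.+1.
set th := gradxPhi gh JH (x n) (y n) - gradxPhi gh JH (x m) (y m).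
move: hrun; rewrite /PDAcL_run => -[hx0' hy0' hz0' ht0' hstep].
have [hpg _ hconvg] := hg. have [hninfg _] := hpg.
have [hpf _ hconvf] := hf. have [hninff _] := hpf.
have htau : forall k, 0 < tau k.
  elim=> [|k IH]; first by rewrite ht0'; case/andP: htau0.
  have [_ _ /= [i [-> _ _ _]]] := hstep k.+1 isT.
  apply: mulr_gt0; last by apply: exprn_gt0; case/andP: hmu.
  by rewrite lt_min htmax mulr_gt0 //; lra.
have [hzn hpxn [i [htn hyp _ _]]] := hstep n isT.
have [hzn1 hpxn1 _] := hstep n.+1 isT.
rewrite /= -/n in hzn hpxn htn hyp hzn1 hpxn1.
have [hgxs hfws _] := hfix_dom.
have [hsubg [hfwsfin _] hHxs] := hfix.
have [Gs hGs] := edom_fin hninfg hgxs.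
have [Fs hFs] := fin_ex hfwsfin.
set sig := tau m. set tn := tau n.
have hsig : 0 < sig := htau m.
have htn0 : 0 < tn := htau n.
have [Gn [hGn hsubn]] := prox_sub hpg hconvg hsig hpxn.
have [Gn1 [hGn1 hsubn1]] := prox_sub hpg hconvg htn0 hpxn1.
set lam := beta * tn.
have hlam : 0 < lam by rewrite mulr_gt0.
have [Fw [hFw hsubw]] := prox_sub hpf hconvf (ltac:(by rewrite invr_gt0) : 0 < lam^-1) (hw n isT).
have hsubw' : forall u, ((Fw + dotv (y m + lam *: (H (x n) - w n)) (u - w n))%:E <= f u)%E.
  move=> u; have := hsubw u; rewrite invrK -dotvZl.
  have -> : lam *: (lam^-1 *: y n.-1 + H (x n) - w n) = y m + lam *: (H (x n) - w n) => //.
  by apply: vec_eq => k; rewrite !mxE /=; field; rewrite gt_eqF.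
have [hyn hfyn] := moreau hninff hlam hFw hsubw' hyp.
have hdxn : edom g (x n) by rewrite /edom hGn ltry.
have hdyn : edom (fconj f) (y n) by rewrite /edom hfyn ltry.
have hseg : forall t, 0 < t < 1 -> edom g (t *: xs + (1 - t) *: x n).
  move=> t ht; apply: le_lt_trans (hconvg _ _ t ht) _.
  by rewrite hGs hGn -!EFinM -EFinD ltry.
have hgrad := phi_grad (y := y n) hgh hJH hdxn hgxs hseg (hA2conv _ hdyn).
have h1 := hsubn1 xs; rewrite hGs lee_fin in h1.
have h2 := hsubn (x n.+1); rewrite hGn1 lee_fin in h2.
have h3 := hsubw' ws; rewrite hFs lee_fin -hyn in h3.
set gn := gradxPhi gh JH (x n) (y n) in hgrad h1 th *.
set gm := gradxPhi gh JH (x m) (y m) in h2 th *.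
have e1 : z n.+1 - tn *: gn - x n.+1 = - (x n.+1 - z n.+1) - tn *: gn.
  by apply: vec_eq => k; rewrite !mxE; ring.
have e2 : z n - sig *: gm - x n = - (psi *: (x n - z n.+1)) - sig *: gm.
  rewrite hzn1; apply: vec_eq => k; rewrite !mxE; field.
  by rewrite gt_eqF //; case/andP: hpsi => hp _; lra.
rewrite e1 dotvBl dotvNl dotvZl in h1.
rewrite e2 dotvBl dotvNl dotvZl dotvZl in h2.
have h1' : tn * Gn1 - dotv (x n.+1 - z n.+1) (xs - x n.+1) - tn * dotv gn (xs - x n.+1) <= tn * Gs.
  have := ler_wpM2l (ltW htn0) h1.
  have -> : tn * (Gn1 + tn^-1 * (- dotv (x n.+1 - z n.+1) (xs - x n.+1) - tn * dotv gn (xs - x n.+1))) = tn * Gn1 - dotv (x n.+1 - z n.+1) (xs - x n.+1) - tn * dotv gn (xs - x n.+1).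
    by field; rewrite gt_eqF.
  done.
have h2' : tn * Gn - psi * (tn / sig) * dotv (x n - z n.+1) (x n.+1 - x n) - tn * dotv gm (x n.+1 - x n) <= tn * Gn1.
  have := ler_wpM2l (ltW htn0) h2.
  have -> : tn * (Gn + sig^-1 * (- (psi * dotv (x n - z n.+1) (x n.+1 - x n)) - sig * dotv gm (x n.+1 - x n))) = tn * Gn - psi * (tn / sig) * dotv (x n - z n.+1) (x n.+1 - x n) - tn * dotv gm (x n.+1 - x n).
    by field; rewrite gt_eqF.
  done.
have hD := dotv_D gn gm xs (x n.+1) (x n).
have hE := dotv_E (H xs) (H (x n)) (y n) (w n) yy.
rewrite hHxs in hE.
have hT2 : beta^-1 * dotv (y n - y m) (yy - y n) = tn * dotv (H (x n) - w n) (yy - y n).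
  have -> : y n - y m = lam *: (H (x n) - w n).
    by rewrite hyn; apply: vec_eq => k; rewrite !mxE; ring.
  by rewrite dotvZl /lam; field; rewrite gt_eqF.
rewrite /Phi in hgrad.
rewrite /Jtilde /Fobj hGn hFw hGs hFs -!EFinD -EFinM lee_fin /th.
rewrite hT2 -hE.
rewrite hHxs in hgrad.
have := ler_wpM2l (ltW htn0) hgrad. have := congr1 (fun r => tn * r) hD. have := ler_wpM2l (ltW htn0) h3. have := h1'. have := h2'. move=> /= *. lra.
Qed.
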